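(* Let $\mathcal{X}\subseteq\mathbb{R}^d$ with the Euclidean norm, let $\mathcal{H}$ be a class of real-valued functions on $\mathcal{X}$ each of which is $L$-Lipschitz, and let $\mathcal{D}_1,\mathcal{D}_2$ be probability distributions over $\mathcal{X}$. Then for any $h_1,h_2\in\mathcal{H}$, $$\mathcal{W}(\mathcal{D}_1,\mathcal{D}_2)\ge\frac{1}{2L}\,\big|\epsilon_{\mathcal{D}_1}(h_1,h_2)-\epsilon_{\mathcal{D}_2}(h_1,h_2)\big|.$$
   Context: $\epsilon_{\mathcal{D}}(h_1,h_2)=\mathbb{E}_{z\sim\mathcal{D}}|h_1(z)-h_2(z)|$. $\mathcal{W}(P_1,P_2)=\inf_{\gamma\in\Pi(P_1,P_2)}\mathbb{E}_{(x,y)\sim\gamma}\|x-y\|_2$ is the Wasserstein-1 distance, where $\Pi(P_1,P_2)$ is the set of couplings of $P_1$ and $P_2$. *)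

(* Defs.v *)
From HB Require Import structures.
From mathcomp Require Import all_boot all_order all_algebra.
From mathcomp Require Import all_classical all_reals all_analysis.
Set Implicit Arguments. Unset Strict Implicit. Unset Printing Implicit Defensive.
Import Order.TTheory GRing.Theory Num.Theory.
Local Open Scope classical_set_scope.
Local Open Scope ring_scope.

(* R^d is represented by d.-tuple R, carrying the product (= Borel) sigma-algebra. *)

Definition edist {R : realType} {d : nat} (x y : d.-tuple R) : R :=
  Num.sqrt (\sum_(i < d) (tnth x i - tnth y i) ^+ 2).

Definition lip_on_eucl {R : realType} {d : nat} (L : R) (X : set (d.-tuple R))
  (h : d.-tuple R -> R) : Prop :=
  forall x y, X x -> X y -> `|h x - h y| <= L * edist x y.

Definition eps {R : realType} {d : nat} (X : set (d.-tuple R))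
  (D : probability (d.-tuple R) R) (h1 h2 : d.-tuple R -> R) : \bar R :=
  (\int[D]_(z in X) (`|h1 z - h2 z|)%:E)%E.

Definition coupling {R : realType} {d : nat}
  (P1 P2 : probability (d.-tuple R) R)
  (g : probability (d.-tuple R * d.-tuple R)%type R) : Prop :=
  (forall A, measurable A -> g (A `*` setT) = P1 A) /\
  (forall B, measurable B -> g (setT `*` B) = P2 B).

Definition wasserstein1 {R : realType} {d : nat}
  (P1 P2 : probability (d.-tuple R) R) : \bar R :=
  ereal_inf [set e | exists g : probability (d.-tuple R * d.-tuple R)%type R,
    coupling P1 P2 g /\ e = (\int[g]_z (edist z.1 z.2)%:E)%E].

(* Main.v *)
Require Import Defs.
From HB Require Import structures.
From mathcomp Require Import all_boot all_order all_algebra.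
From mathcomp Require Import all_classical all_reals all_analysis.
From mathcomp Require Import measurable_realfun.
From mathcomp Require Import ring lra.
Import Order.TTheory GRing.Theory Num.Theory.
Local Open Scope classical_set_scope.
Local Open Scope ring_scope.

Lemma edist_ge0 (R : realType) (d : nat) (x y : d.-tuple R) : 0 <= Defs.edist x y.
Proof. exact: sqrtr_ge0. Qed.

Lemma measurable_edist (R : realType) (d : nat) :
  measurable_fun setT (fun z : d.-tuple R * d.-tuple R => Defs.edist z.1 z.2).
Proof.
rewrite /Defs.edist.
apply: (@measurableT_comp _ _ _ _ _ _ (@Num.sqrt R) _ (fun z : d.-tuple R * d.-tuple R => \sum_(i < d) (tnth z.1 i - tnth z.2 i) ^+ 2)).
  exact: measurable_realfun.continuous_measurable_fun (@sqrt_continuous R).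
apply: measurable_sum => i.
apply: measurable_funX; apply: measurable_funB.
- exact: measurableT_comp (measurable_tnth i) measurable_fst.
- exact: measurableT_comp (measurable_tnth i) measurable_snd.
Qed.

Lemma lip2 (R : realType) (d : nat) (X : set (d.-tuple R)) (L : R)
  (h1 h2 : d.-tuple R -> R) :
  lip_on_eucl L X h1 -> lip_on_eucl L X h2 ->
  forall x y, X x -> X y ->
  `| `|h1 x - h2 x| - `|h1 y - h2 y| | <= 2 * L * Defs.edist x y.
Proof.
move=> l1 l2 x y Xx Xy.
have e : (h1 x - h2 x) - (h1 y - h2 y) = (h1 x - h1 y) - (h2 x - h2 y) by ring.
apply: le_trans (ler_dist_dist _ _) _; rewrite e.
apply: le_trans (ler_normB _ _) _.
have := l1 x y Xx Xy; have := l2 x y Xx Xy.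
set a := L * Defs.edist x y; have -> : 2 * L * Defs.edist x y = 2 * a by rewrite /a mulrA.
lra.
Qed.

Theorem lemmaA2 (R : realType) (d : nat) (X : set (d.-tuple R))
  (L : R) (H : set (d.-tuple R -> R))
  (D1 D2 : probability (d.-tuple R) R) (h1 h2 : d.-tuple R -> R) :
  measurable X -> 0 < L ->
  D1 X = 1%E -> D2 X = 1%E ->
  (forall h, H h -> lip_on_eucl L X h) ->
  H h1 -> H h2 ->
  D1.-integrable X (fun z => (h1 z - h2 z)%:E) ->
  D2.-integrable X (fun z => (h1 z - h2 z)%:E) ->
  (((2 * L)^-1)%:E * `|eps X D1 h1 h2 - eps X D2 h1 h2| <= wasserstein1 D1 D2)%E.
Proof.
move=> mX L0 D1X D2X Hlip Hh1 Hh2 i1 i2.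
set F := fun z => `|h1 z - h2 z|.
have mF : measurable_fun X F.
  apply: measurableT_comp; first exact: normr_measurable.
  by move/integrableP : i1 => [/measurable_EFinP m _].
have mFE : measurable_fun X (fun z => (F z)%:E) by exact/measurable_EFinP.
have finF1 : (eps X D1 h1 h2 < +oo)%E by move/integrableP : i1 => [_].
have finF2 : (eps X D2 h1 h2 < +oo)%E by move/integrableP : i2 => [_].
have mXX : measurable (X `*` X) by exact: measurableX.
have mXc : measurable (~` X) by exact: measurableC.
apply: le_ereal_inf_tmp => _ [g [[cg1 cg2] ->]].
have gA : g (X `*` ~` X) = 0%E.
  apply: (subset_measure0 (B := setT `*` ~` X)) => //.
  - exact: measurableX.
  - exact: measurableX.
  - by move=> z [].
  - have := cg2 _ mXc; rewrite probability_setC // D2X subee // => <-.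
have gB : g (~` X `*` X) = 0%E.
  apply: (subset_measure0 (B := ~` X `*` setT)) => //.
  - exact: measurableX.
  - exact: measurableX.
  - by move=> z [].
  - have := cg1 _ mXc; rewrite probability_setC // D1X subee // => <-.
have F0 : forall z, (0 <= (F z)%:E)%E.
  by move=> z; rewrite lee_fin /F normr_ge0.
have mF1 : measurable_fun (X `*` X) (fun z : d.-tuple R * d.-tuple R => (F z.1)%:E).
  apply: (@measurable_comp _ _ _ _ _ _ X (fun x => (F x)%:E) (X `*` X) fst mX) => //.
    by move=> _ [z [Xz _] <-].
  by apply: (measurable_funS measurableT) => //; exact: measurable_fst.
have mF2 : measurable_fun (X `*` X) (fun z : d.-tuple R * d.-tuple R => (F z.2)%:E).
  apply: (@measurable_comp _ _ _ _ _ _ X (fun x => (F x)%:E) (X `*` X) snd mX) => //.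
    by move=> _ [z [_ Xz] <-].
  by apply: (measurable_funS measurableT) => //; exact: measurable_snd.
have key1 : eps X D1 h1 h2 = (\int[g]_(z in X `*` X) (F z.1)%:E)%E.
  rewrite /eps (eq_measure_integral (pushforward g fst)); last first.
    move=> A mA _; rewrite /pushforward; apply: esym; apply: (etrans _ (cg1 _ mA)); congr (g _).
    by apply/seteqP; split => z /=; [move=> ?; split|case].
  rewrite (ge0_integral_pushforward measurable_fst) //; try by move=> z _; exact: F0.
  have eT : fst @^-1` X = X `*` X `|` X `*` ~` X.
    apply/seteqP; split => z /=.
      by move=> Xz; case: (pselect (X z.2)) => ?; [left|right].
    by case => -[].
  have mXXc : measurable (X `*` ~` X) by exact: measurableX.
  rewrite eT (ge0_integral_setU _ mXX mXXc); last 3 first.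
  - apply: (@measurable_comp _ _ _ _ _ _ X (fun x => (F x)%:E) _ fst mX) => //.
      by move=> _ [z [[Xz _]|[Xz _]] <-].
    by apply: (measurable_funS measurableT) => //; exact: measurable_fst.
  - by move=> z _; exact: F0.
  - by rewrite disj_set2E; apply/eqP/seteqP; split => z // -[[_ ?] [_ ?]].
  rewrite [X in (_ + X)%E]null_set_integral ?adde0 //.
  apply: (@measurable_comp _ _ _ _ _ _ X (fun x => (F x)%:E) _ fst mX) => //.
    by move=> _ [z [Xz _] <-].
  by apply: (measurable_funS measurableT) => //; exact: measurable_fst.
have key2 : eps X D2 h1 h2 = (\int[g]_(z in X `*` X) (F z.2)%:E)%E.
  rewrite /eps (eq_measure_integral (pushforward g snd)); last first.
    move=> A mA _; rewrite /pushforward; apply: esym; apply: (etrans _ (cg2 _ mA)); congr (g _).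
    by apply/seteqP; split => z /=; [move=> ?; split|case].
  rewrite (ge0_integral_pushforward measurable_snd) //; try by move=> z _; exact: F0.
  have eT : snd @^-1` X = X `*` X `|` ~` X `*` X.
    apply/seteqP; split => z /=.
      by move=> Xz; case: (pselect (X z.1)) => ?; [left|right].
    by case => -[].
  have mXXc : measurable (~` X `*` X) by exact: measurableX.
  rewrite eT (ge0_integral_setU _ mXX mXXc); last 3 first.
  - apply: (@measurable_comp _ _ _ _ _ _ X (fun x => (F x)%:E) _ snd mX) => //.
      by move=> _ [z [[_ Xz]|[_ Xz]] <-].
    by apply: (measurable_funS measurableT) => //; exact: measurable_snd.
  - by move=> z _; exact: F0.
  - by rewrite disj_set2E; apply/eqP/seteqP; split => z // -[[? _] [? _]].
  rewrite [X in (_ + X)%E]null_set_integral ?adde0 //.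
  apply: (@measurable_comp _ _ _ _ _ _ X (fun x => (F x)%:E) _ snd mX) => //.
    by move=> _ [z [_ Xz] <-].
  by apply: (measurable_funS measurableT) => //; exact: measurable_snd.
have ig1 : g.-integrable (X `*` X) (EFin \o (fun z : d.-tuple R * d.-tuple R => F z.1)).
  apply/integrableP; split; first exact: mF1.
  apply: le_lt_trans finF1; rewrite key1 le_eqVlt; apply/orP; left; apply/eqP.
  by apply: eq_integral => z _ /=; rewrite /F normr_id.
have ig2 : g.-integrable (X `*` X) (EFin \o (fun z : d.-tuple R * d.-tuple R => F z.2)).
  apply/integrableP; split; first exact: mF2.
  apply: le_lt_trans finF2; rewrite key2 le_eqVlt; apply/orP; left; apply/eqP.
  by apply: eq_integral => z _ /=; rewrite /F normr_id.
rewrite key1 key2 -(@integralB_EFin _ _ _ g (X `*` X) (fun z => F z.1) (fun z => F z.2) mXX ig1 ig2).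
have mB : measurable_fun (X `*` X) (fun z : d.-tuple R * d.-tuple R => ((F z.1)%:E - (F z.2)%:E)%E).
  exact: emeasurable_funB.
have mE : measurable_fun (X `*` X) (fun z : d.-tuple R * d.-tuple R => (Defs.edist z.1 z.2)%:E).
  apply/measurable_EFinP; apply: (measurable_funS measurableT) => //.
  exact: measurable_edist.
have L2 : (0 <= 2 * L)%R by rewrite mulr_ge0 // ltW.
have step : (`|\int[g]_(z in X `*` X) ((F z.1)%:E - (F z.2)%:E)| <=
    (2 * L)%:E * \int[g]_z (Defs.edist z.1 z.2)%:E)%E.
  apply: le_trans (le_abse_integral _ mXX mB) _.
  apply: (@le_trans _ _ (\int[g]_(z in X `*` X) ((2 * L)%:E * (Defs.edist z.1 z.2)%:E))%E).
    apply: ge0_le_integral => //.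
    - exact: measurableT_comp mB.
    - apply: emeasurable_funM => //; exact: measurable_cst.
    - move=> z [X1 X2]; rewrite /= -EFinM lee_fin.
      exact: (@lip2 R d X L h1 h2 (Hlip _ Hh1) (Hlip _ Hh2)).
  have E0 : forall z, (X `*` X) z -> (0 <= (Defs.edist z.1 z.2)%:E)%E.
    by move=> z _; rewrite lee_fin edist_ge0.
  rewrite (ge0_integralZl_EFin g mXX E0 mE L2).
  apply: lee_pmul => //; first exact: integral_ge0.
  apply: (ge0_subset_integral g mXX measurableT) => //.
  - apply/measurable_EFinP; exact: measurable_edist.
  - by move=> z _; rewrite lee_fin edist_ge0.
have Li : (0 <= (2 * L)^-1)%R by rewrite invr_ge0.
apply: le_trans (lee_pmul _ _ (lexx _) step) _ => //.
rewrite muleA -EFinM mulVf ?mul1e //.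
by rewrite mulf_neq0 // ?gt_eqF.
Qed.
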